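(* Let $n\ge 1$, $m\ge 1$, and let $\lambda=(\lambda_1,\ldots,\lambda_n)\in\mathbb{R}_{<0}^n$ (not necessarily distinct). Consider the $n$-th order linear system $$x^{(n)}=-\kappa_{0,\lambda}x^{(0)}-\kappa_{1,\lambda}x^{(1)}-\cdots-\kappa_{n-1,\lambda}x^{(n-1)},\qquad x(t)\in\mathbb{R}^m,$$ whose characteristic polynomial $s^n+\sum_{k=0}^{n-1}\kappa_{k,\lambda}s^k$ has roots $\lambda_1,\ldots,\lambda_n$. Let $x(t)$ be its solution starting at $t=0$ from an arbitrary initial state $(x^{(0)}_0,\ldots,x^{(n-1)}_0)\in\mathbb{R}^{n\times m}$. Let $\lambda_{\neg\max}$ be the $(n-1)$-tuple obtained from $\lambda$ by removing one entry equal to $\max(\lambda_1,\ldots,\lambda_n)$. Then for all $t\ge 0$, $$x(t)\in\operatorname{conv}\left\{\sum_{j=0}^{i-1}\frac{\kappa_{j,\lambda_{\neg\max}}}{\kappa_{0,\lambda_{\neg\max}}}x^{(j)}_0 \;:\; i=0,1,\ldots,n\right\},$$ i.e. $x(t)$ lies in the convex hull of $0,\ x^{(0)}_0,\ x^{(0)}_0+\frac{\kappa_{1,\lambda_{\neg\max}}}{\kappa_{0,\lambda_{\neg\max}}}x^{(1)}_0,\ \ldots,\ \sum_{j=0}^{n-1}\frac{\kappa_{j,\lambda_{\neg\max}}}{\kappa_{0,\lambda_{\neg\max}}}x^{(j)}_0$.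
   Context: $x^{(k)}$ denotes the $k$-th time derivative of $x$. For a finite tuple $\mu=(\mu_1,\ldots,\mu_p)$ of complex numbers (possibly empty, $p=0$), the companion coefficients are $\kappa_{k,\mu}=(-1)^{p-k}\sum_{I\subseteq\{1,\ldots,p\},\,|I|=p-k}\prod_{i\in I}\mu_i$ for $0\le k\le p$ (empty sum $=0$, empty product $=1$), so that $\prod_{i=1}^p(s-\mu_i)=\sum_{k=0}^{p}\kappa_{k,\mu}s^k$ and $\kappa_{p,\mu}=1$; also $\kappa_{k,\mu}=0$ for $k\notin\{0,\ldots,p\}$. An empty sum of vectors is $0$. $\operatorname{conv}$ denotes convex hull. *)

(* Defs.v *)
From HB Require Import structures.
From mathcomp Require Import all_boot all_order all_algebra.
From mathcomp Require Import all_classical all_reals all_analysis.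
Set Implicit Arguments. Unset Strict Implicit. Unset Printing Implicit Defensive.
Import Order.TTheory GRing.Theory Num.Theory.
Local Open Scope ring_scope.

Definition kappa (R : pzRingType) (k : nat) (mu : seq R) : R :=
  if (k <= size mu)%N then
    (-1) ^+ (size mu - k) *
      \sum_(I : {set 'I_(size mu)} | #|I| == (size mu - k)%N) \prod_(i in I) mu`_i
  else 0.

Definition in_conv_hull (R : realType) (V : lmodType R) (N : nat)
    (p : 'I_N -> V) (y : V) : Prop :=
  exists w : 'I_N -> R, (forall i, 0 <= w i) /\ \sum_(i < N) w i = 1 /\
    y = \sum_(i < N) w i *: p i.

(* Main.v *)
Require Import Defs.
From HB Require Import structures.
From mathcomp Require Import all_boot all_order all_algebra.
From mathcomp Require Import all_classical all_reals all_analysis.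
From mathcomp Require Import ring lra zify.
Set Implicit Arguments. Unset Strict Implicit. Unset Printing Implicit Defensive.
Import Order.TTheory GRing.Theory Num.Theory.
Import numFieldNormedType.Exports.
Local Open Scope ring_scope.

Section Q.
Variable R : realType.
Definition P (s : seq R) : {poly R} := \prod_(a <- s) ('X - a%:P).

Lemma coefXsubCM (r : R) (f : {poly R}) j :
  (('X - r%:P) * f)`_j = (if j is j'.+1 then f`_j' else 0) - r * f`_j.
Proof. by rewrite mulrBl coefB coefXM coefCM; case: j. Qed.

Lemma sge (x y : R) : x <= y -> 0 <= y - x.
Proof. by rewrite subr_ge0. Qed.

Definition NN (f : {poly R}) := forall j, 0 <= f`_j.
Definition GLC (f : {poly R}) := forall i j, (i <= j)%N ->
  f`_i * f`_(j.+2) <= f`_(i.+1) * f`_(j.+1).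
Definition MR (f g : {poly R}) := forall i j, (j <= i)%N ->
  f`_(i.+1) * g`_j <= f`_i * g`_(j.+1).

Lemma NN_step r f : r <= 0 -> NN f -> NN (('X - r%:P) * f).
Proof.
move=> hr hf [|j]; rewrite coefXsubCM.
  by have := hf 0%N; nra.
by have := hf j; have := hf j.+1; nra.
Qed.

Lemma GLC_step r f : r <= 0 -> NN f -> GLC f -> GLC (('X - r%:P) * f).
Proof.
move=> hr hn hg i j ij; rewrite !coefXsubCM.
set c := - r.
have hc : 0 <= c by rewrite /c; lra.
have E : forall a, - r * a = c * a by move=> a; rewrite /c.
case: i ij => [|i] ij.
  have h1 := hg 0%N j (leq0n _).
  have := mulr_ge0 (mulr_ge0 hc hc) (sge h1).
  have := mulr_ge0 hc (mulr_ge0 (hn 1%N) (hn j)).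
  have := mulr_ge0 (hn 0%N) (hn j).
  rewrite -!E. nra.
have hM : f`_i * f`_(j.+2) <= f`_(i.+2) * f`_j.
  apply: le_trans (hg i j (ltnW ij)) _.
  case: (ltngtP i.+1 j) ij => // [lt _|<- _]; last by rewrite mulrC.
  by case: j lt => // j lt; apply: hg.
have hA : f`_i * f`_(j.+1) <= f`_(i.+1) * f`_j.
  by clear hM; case: j ij => [//|j] ij; apply: hg.
have hB := hg i.+1 j ij.
have := mulr_ge0 (mulr_ge0 hc hc) (sge hB).
have := mulr_ge0 hc (sge hM).
rewrite -!E. nra.
Qed.

Lemma MR_refl f : GLC f -> MR f f.
Proof.
move=> hg i j ji; case: (ltngtP j i) ji => // [lt _|-> _]; last by rewrite mulrC.
case: i lt => // i lt.
by rewrite [X in X <= _]mulrC [X in _ <= X]mulrC; apply: hg.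
Qed.

Lemma MR_step r f g : r <= 0 -> NN f -> NN g -> MR f g -> MR f (('X - r%:P) * g).
Proof.
move=> hr hf hg hm i j ji; rewrite !coefXsubCM.
set c := - r.
have hc : 0 <= c by rewrite /c; lra.
have E : forall a, - r * a = c * a by move=> a; rewrite /c.
case: j ji => [|j] ji.
  have := mulr_ge0 hc (sge (hm i 0%N ji)).
  have := mulr_ge0 (hf i) (hg 0%N).
  rewrite -!E. nra.
have := mulr_ge0 hc (sge (hm i j.+1 ji)).
have := sge (hm i j (ltnW ji)).
rewrite -!E. nra.
Qed.

Lemma P_cons a s : P (a :: s) = ('X - a%:P) * P s.
Proof. by rewrite /P big_cons. Qed.

Lemma P_cat s t : P (s ++ t) = P s * P t.
Proof. by rewrite /P big_cat. Qed.

Lemma NN_P s : (forall a, a \in s -> a <= 0) -> NN (P s).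
Proof.
elim: s => [|a s IH] hs.
  by move=> j; rewrite /P big_nil coefC; case: j => //=.
rewrite P_cons; apply: NN_step; first by apply: hs; rewrite mem_head.
by apply: IH => b bs; apply: hs; rewrite inE bs orbT.
Qed.

Lemma GLC_P s : (forall a, a \in s -> a <= 0) -> GLC (P s).
Proof.
elim: s => [|a s IH] hs.
  move=> i j _; rewrite /P big_nil !coefC /=.
  by case: i => /=; rewrite ?mul0r ?mulr0.
have hs' : forall b, b \in s -> b <= 0 by move=> b bs; apply: hs; rewrite inE bs orbT.
rewrite P_cons; apply: GLC_step; first by apply: hs; rewrite mem_head.
  exact: NN_P.
exact: IH.
Qed.

Lemma MR_P s t : (forall a, a \in s ++ t -> a <= 0) -> MR (P s) (P (t ++ s)).
Proof.
move=> h.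
have hs : forall a, a \in s -> a <= 0 by move=> a hA; apply: h; rewrite mem_cat hA.
elim: t h => [|b t IH] h /=; first by apply: MR_refl; apply: GLC_P.
have ht : forall a, a \in s ++ t -> a <= 0.
  by move=> a; rewrite !mem_cat => /orP[]hA; apply: h; rewrite !mem_cat /= ?inE hA ?orbT.
rewrite P_cons; apply: MR_step; first by apply: h; rewrite mem_cat mem_head orbT.
- exact: NN_P.
- by apply: NN_P => a; rewrite mem_cat orbC -mem_cat; apply: ht.
exact: IH.
Qed.

Lemma pos_P s : (forall a, a \in s -> a < 0) -> forall j, (j <= size s)%N -> 0 < (P s)`_j.
Proof.
elim: s => [|a s IH] hs j.
  by rewrite leqn0 => /eqP->; rewrite /P big_nil coefC ltr01.
have hs' : forall b, b \in s -> b < 0 by move=> b bs; apply: hs; rewrite inE bs orbT.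
have ha : a < 0 by apply: hs; rewrite mem_head.
have hn : NN (P s) by apply: NN_P => b /hs' /ltW.
rewrite P_cons coefXsubCM /=; case: j => [_|j].
  by have := IH hs' 0%N (leq0n _); nra.
rewrite ltnS => js; have := IH hs' j js; have := hn j.+1; nra.
Qed.
Lemma kappaE k s : kappa k s = (P s)`_k.
Proof.
rewrite /kappa /P; case: ifP => h; first by rewrite coef_prod_XsubC.
rewrite nth_default // (size_prod_XsubC _ id).
by rewrite ltnNge h.
Qed.
End Q.

Section PS.
Variable R : realType.

Lemma sgeP (x y : R) : x <= y -> 0 <= y - x.
Proof. by rewrite subr_ge0. Qed.

Definition coefs (s : nat -> R) := fun m : nat => s m / (m`!)%:R.
Definition PS (s : nat -> R) (x : R) : R := limn (pseries (coefs s) x).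
Definition bnd (s : nat -> R) := exists A M : R, 0 <= A /\ 0 <= M /\
  forall m, `|s m| <= A * M ^+ m.

Lemma bnd_shift s : bnd s -> bnd (fun m => s m.+1).
Proof.
move=> [A [M [hA [hM h]]]]; exists (A * M), M; split; first exact: mulr_ge0.
split => // m; by rewrite -mulrA -exprS.
Qed.

Lemma PS_cvg s x : bnd s -> cvgn (pseries (coefs s) x).
Proof.
move=> [A [M [hA [hM h]]]].
apply: normed_cvg.
apply: (@series_le_cvg _ _ (fun m => A * exp_coeff (M * `|x|) m)).
- by move=> m /=.
- by move=> m; rewrite mulr_ge0 // exp_coeff_ge0 // mulr_ge0.
- move=> m /=; rewrite /coefs /exp_coeff /= normrM normrM normfV normrX.
  rewrite [`|_%:R|]ger0_norm // exprMn.
  have hf : 0 <= (m`!%:R : R)^-1 by rewrite invr_ge0.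
  have hx : 0 <= `|x| ^+ m by rewrite exprn_ge0.
  move: (h m) => hsm.
  have := mulr_ge0 (sgeP hsm) (mulr_ge0 hf hx).
  rewrite -[_ / _]/(_ * _) ; nra.
- rewrite (_ : (fun m => A * exp_coeff (M * `|x|) m) = A *: exp_coeff (M * `|x|)) //.
  rewrite seriesZ; apply: is_cvgZr; exact: is_cvg_series_exp_coeff.
Qed.

Lemma coefs_diffs s : pseries_diffs (coefs s) = coefs (fun m => s m.+1).
Proof.
apply/funext => m; rewrite /pseries_diffs /coefs factS natrM invfM.
have h0 : (m.+1%:R : R) != 0 by rewrite pnatr_eq0.
field. by rewrite pnatr_eq0 -lt0n fact_gt0 /= (_ : 1 + m%:R = m.+1%:R) // ?mulrS // pnatr_eq0.
Qed.

Lemma PS_derive s (x : R) : bnd s -> is_derive x (1:R) (PS s) (PS (fun m => s m.+1) x).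
Proof.
move=> hs; rewrite /PS -coefs_diffs.
apply: (@pseries_snd_diffs _ _ (`|x| + 1)).
- exact: PS_cvg.
- by rewrite coefs_diffs; apply: PS_cvg; apply: bnd_shift.
- by rewrite !coefs_diffs; apply: PS_cvg; exact: (bnd_shift (bnd_shift hs)).
by rewrite [ltRHS]ger0_norm ?ltrDl // addr_ge0.
Qed.

Lemma PS_lin a b s t x : bnd s -> bnd t ->
  PS (fun m => a * s m + b * t m) x = a * PS s x + b * PS t x.
Proof.
move=> hs ht; rewrite /PS.
have -> : pseries (coefs (fun m => a * s m + b * t m)) x =
   a *: pseries (coefs s) x + b *: pseries (coefs t) x.
  apply/funext => n; rewrite /pseries /series /= !fctE.
  rewrite !scaler_sumr -big_split /=; apply: eq_bigr => i _.
  rewrite /coefs /=; rewrite /GRing.scale /=; ring.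
rewrite limD; first last.
- by apply: is_cvgZr; apply: PS_cvg.
- by apply: is_cvgZr; apply: PS_cvg.
by rewrite !limZl_tmp //; apply: PS_cvg.
Qed.

Lemma PS0 s : PS s 0 = s 0%N.
Proof.
rewrite /PS; apply: lim_near_cst => //.
near=> m; rewrite /pseries /series /=.
have m0 : (0 < m)%N by near: m; exists 1%N.
rewrite -(prednK m0) big_nat_recl //= big1 ?addr0.
  by rewrite /coefs /= expr0 mulr1 divr1.
by move=> i _; rewrite expr0n /= mulr0.
Unshelve. all: by end_near. Qed.
End PS.

Section W.
Variable R : realType.

Lemma is_derive_expM (c t : R) :
  is_derive t (1:R) (fun s => expR (c * s)) (c * expR (c * t)).
Proof.
have hl : forall u : R, is_derive u (1:R) (fun s : R => c * s) c.
  move=> u.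
  have h := @is_deriveZ R R R id c u 1 1 (is_derive_id _ _).
  have -> : (fun s : R => c * s) = c *: id by apply/funext => s; rewrite !fctE.
  by rewrite -[c in is_derive _ _ _ c]mulr1.
have d1 : forall u : R, derivable (fun s : R => c * s) u 1.
  by move=> u; apply: ex_derive; apply: hl.
have dc : derivable (expR \o (fun s : R => c * s)) t 1.
  apply/derivable1_diffP; apply: differentiable_comp.
    by apply/derivable1_diffP.
  by apply/derivable1_diffP; exact: derivable_expR.
apply: (@is_derive_eq _ _ _ _ _ _ _ ('D_1 (expR \o (fun s : R => c * s)) t)).
  exact: derivableP.
rewrite -derive1E derive1_comp //.
rewrite !derive1E derive_val.
have := hl t => /(@derive_val _ _ _ _ _ _ _) ->; by rewrite mulrC.
Qed.

Lemma pos_lemma (c : R) (f g : R -> R) : 0 <= c ->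
  (forall t, is_derive t (1:R) f (c * (g t - f t))) ->
  (forall t, 0 <= t -> 0 <= g t) -> 0 <= f 0 ->
  forall t, 0 <= t -> 0 <= f t.
Proof.
move=> hc hf hg h0 t ht.
pose h := (fun s => expR (c * s)) * f.
have hd : forall s, is_derive s (1:R) h (c * expR (c * s) * g s).
  move=> s.
  have := @is_deriveM _ _ _ _ _ _ _ _ (is_derive_expM c s) (hf s).
  move=> H; apply: (is_derive_eq H).
  rewrite /GRing.scale /=; ring.
have hdv : forall s, derivable h s 1 by move=> s; apply: ex_derive; apply: hd.
have : h 0 <= h t.
  apply: (@ger0_derive1_ndecr _ h 0 t) => //.
  - move=> s; rewrite in_itv /= => /andP[s0 _].
    rewrite derive1E (@derive_val _ _ _ _ _ _ _ (hd s)).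
    by rewrite mulr_ge0 ?mulr_ge0 ?expR_ge0 // hg // ltW.
  - by apply: derivable_within_continuous => s _.
rewrite /h !fctE mulr0 expR0 mul1r => hle.
have he := expR_gt0 (c * t).
have : 0 <= expR (c * t) * f t by apply: le_trans hle.
by rewrite pmulr_rge0.
Qed.
End W.

Lemma is_derive_sumf (R : realType) (V : normedModType R) N (F : 'I_N -> R -> V)
  (dF : 'I_N -> V) (t : R) :
  (forall i, is_derive t (1:R) (F i) (dF i)) ->
  is_derive t (1:R) (fun s => \sum_(i < N) F i s) (\sum_(i < N) dF i).
Proof.
move=> h.
have -> : (fun s => \sum_(i < N) F i s) = \sum_(i < N) F i.
  by apply/funext => s; rewrite fct_sumE.
exact: is_derive_sum.
Qed.

Lemma is_derive_coord (R : realType) m (F : R -> 'rV[R]_m) (F' : 'rV[R]_m) (t : R) i j :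
  is_derive t (1:R) F F' -> is_derive t (1:R) (fun s => F s i j) (F' i j).
Proof.
move=> hF.
have dF : derivable F t 1 by apply: ex_derive; exact: hF.
have dc := (derivable_mxP F t 1).1 dF i j.
have E := derive_mx dF.
have <- : 'D_1 (fun s => F s i j) t = F' i j.
  by rewrite -(@derive_val _ _ _ _ _ _ _ hF) E mxE.
exact: derivableP.
Qed.

Section Cascade.
Variables (R : realType) (m n : nat) (x : R -> 'rV[R]_m) (rs : seq R).
Hypothesis hsize : size rs = n.
Hypothesis hneg : forall a, a \in rs -> a < 0.
Hypothesis hder : forall (k : nat) (t : R), (k < n)%N -> derivable (derive1n k x) t 1.
Hypothesis hzero : forall t, \sum_(j < n.+1) (P (take n rs))`_j *: derive1n j x t = 0.

Definition q k := P (take k rs).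
Definition Nk k := (q k)`_0.
Definition U k t := \sum_(j < k.+1) (q k)`_j *: derive1n j x t.
Definition u k t := (Nk k)^-1 *: U k t.
Definition cs k := - rs`_k.

Lemma size_q k : (k <= n)%N -> size (q k) = k.+1.
Proof.
move=> kn; rewrite /q /P (size_prod_XsubC _ id) size_take hsize.
by case: ltnP => // h; congr _.+1; apply/eqP; rewrite eqn_leq kn h.
Qed.

Lemma take_neg k a : a \in take k rs -> a < 0.
Proof. by move=> /mem_take; apply: hneg. Qed.

Lemma Nk_gt0 k : 0 < Nk k.
Proof. by apply: pos_P => //; apply: take_neg. Qed.

Lemma q_succ k : (k < n)%N -> q k.+1 = ('X - (rs`_k)%:P) * q k.
Proof.
move=> kn; rewrite /q (take_nth 0) ?hsize // -cats1 P_cat mulrC.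
by congr (_ * _); rewrite /P big_cons big_nil mulr1.
Qed.

Lemma cs_gt0 k : (k < n)%N -> 0 < cs k.
Proof.
move=> kn; rewrite /cs oppr_gt0; apply: hneg; apply: mem_nth; by rewrite hsize.
Qed.

Lemma D_derive j t : (j < n)%N ->
  is_derive t (1:R) (derive1n j x) (derive1n j.+1 x t).
Proof.
move=> jn; rewrite derive1nS derive1E; apply: derivableP; exact: hder.
Qed.

Lemma U_derive k t : (k < n)%N ->
  is_derive t (1:R) (U k) (U k.+1 t + rs`_k *: U k t).
Proof.
move=> kn.
have H : is_derive t (1:R) (U k) (\sum_(j < k.+1) (q k)`_j *: derive1n j.+1 x t).
  rewrite /U.
  have -> : (fun t0 => \sum_(j < k.+1) (q k)`_j *: derive1n j x t0) =
            \sum_(j < k.+1) (fun t0 => (q k)`_j *: derive1n j x t0).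
    by apply/funext => s; rewrite fct_sumE.
  apply: is_derive_sum => j.
  apply: is_deriveZ; apply: D_derive.
  exact: (leq_ltn_trans (ltn_ord j) _) || exact: (leq_trans (ltn_ord j) kn).
apply: (is_derive_eq H).
rewrite /U (q_succ kn).
have E1 : \sum_(j < k.+2) (('X - (rs`_k)%:P) * q k)`_j *: derive1n j x t =
   \sum_(j < k.+2) (if (j : nat) is j'.+1 then (q k)`_j' else 0) *: derive1n j x t
   - rs`_k *: \sum_(j < k.+2) (q k)`_j *: derive1n j x t.
  rewrite scaler_sumr -sumrB; apply: eq_bigr => j _.
  by rewrite coefXsubCM scalerBl scalerA.
have E2 : \sum_(j < k.+2) (if (j : nat) is j'.+1 then (q k)`_j' else 0) *: derive1n j x t
   = \sum_(j < k.+1) (q k)`_j *: derive1n j.+1 x t.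
  by rewrite big_ord_recl /= scale0r add0r.
have E3 : \sum_(j < k.+2) (q k)`_j *: derive1n j x t =
   \sum_(j < k.+1) (q k)`_j *: derive1n j x t.
  rewrite big_ord_recr /=.
  have -> : (q k)`_k.+1 = 0 by rewrite nth_default // size_q // ltnW.
  by rewrite scale0r addr0.
by rewrite E1 E2 E3 subrK.
Qed.

Lemma Nk_succ k : (k < n)%N -> Nk k.+1 = cs k * Nk k.
Proof. by move=> kn; rewrite /Nk q_succ // coefXsubCM /cs sub0r mulNr. Qed.

Lemma u_derive k t : (k < n)%N ->
  is_derive t (1:R) (u k) (cs k *: (u k.+1 t - u k t)).
Proof.
move=> kn.
have H := @is_deriveZ _ _ _ (U k) ((Nk k)^-1) t 1 _ (U_derive t kn).
apply: (is_derive_eq H).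
rewrite /u Nk_succ // scalerDr scalerBr !scalerA.
have h1 := Nk_gt0 k; have h2 := cs_gt0 kn.
have -> : cs k * (cs k * Nk k)^-1 = (Nk k)^-1 by field; rewrite ?gt_eqF //.
rewrite /cs; congr (_ + _); rewrite -scaleNr; congr (_ *: _); by rewrite mulNr opprK mulrC.
Qed.

Lemma u_n t : u n t = 0.
Proof. by rewrite /u /U -/(q n) /q hzero scaler0. Qed.

Fixpoint Bw (i m : nat) : nat -> R :=
  if m is m'.+1 then fun k => if (k < n)%N then cs k * (Bw i m' k.+1 - Bw i m' k) else 0
  else fun k => (k == i)%:R.

Definition Cb := \sum_(k < n) cs k.

Lemma cs_le k : (k < n)%N -> 0 <= cs k <= Cb.
Proof.
move=> kn; rewrite ltW ?cs_gt0 //=.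
rewrite /Cb (bigD1 (Ordinal kn)) //= lerDl sumr_ge0 // => j _.
by rewrite ltW ?cs_gt0.
Qed.

Lemma Cb_ge0 : 0 <= Cb.
Proof. by rewrite /Cb sumr_ge0 // => j _; rewrite ltW ?cs_gt0. Qed.

Lemma Bw_bnd i k : bnd (fun m => Bw i m k).
Proof.
exists 1, (Cb *+ 2); split => //; split; first by rewrite mulrn_wge0 // Cb_ge0.
move=> mm; rewrite mul1r; elim: mm k => [|mm IH] k /=.
  by rewrite expr0; case: (k == i); rewrite ?normr1 ?normr0.
case: ifP => kn; last by rewrite normr0 exprn_ge0 // mulrn_wge0 // Cb_ge0.
have /andP[c0 cC] := cs_le kn.
rewrite normrM (ger0_norm c0) exprS.
have h1 := IH k.+1; have h2 := IH k.
have h3 : `|Bw i mm k.+1 - Bw i mm k| <= (Cb *+ 2) ^+ mm *+ 2.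
  by apply: le_trans (ler_normB _ _) _; rewrite mulr2n lerD.
have h4 : 0 <= `|Bw i mm k.+1 - Bw i mm k| by [].
have h5 : 0 <= (Cb *+ 2) ^+ mm by rewrite exprn_ge0 // mulrn_wge0 // Cb_ge0.
rewrite mulr2n in h3 *; have := Cb_ge0; set X := `|_ - _| in h3 h4 *; set Y := _ ^+ mm in h3 h5 *.
nra.
Qed.

Definition w i k t := PS (fun m => Bw i m k) t.

Lemma w_derive i k t : (k < n)%N ->
  is_derive t (1:R) (w i k) (cs k * (w i k.+1 t - w i k t)).
Proof.
move=> kn; have H := PS_derive t (Bw_bnd i k).
apply: (is_derive_eq H).
have -> : (fun m => Bw i m.+1 k) =
    (fun m => cs k * Bw i m k.+1 + (- cs k) * Bw i m k).
  by apply/funext => mm /=; rewrite kn; ring.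
rewrite PS_lin; try exact: Bw_bnd.
by rewrite /w; ring.
Qed.

Lemma w0 i k : w i k 0 = (k == i)%:R.
Proof. by rewrite /w PS0. Qed.

Lemma wn i t : (i < n)%N -> w i n t = 0.
Proof.
move=> iN; rewrite /w.
have -> : (fun m => Bw i m n) = (fun m => 0 * Bw i m n + 0 * Bw i m n).
  apply/funext => mm; rewrite !mul0r addr0.
  by case: mm => [|mm] /=; rewrite ?ltnn // gtn_eqF.
rewrite PS_lin; try exact: Bw_bnd.
by rewrite !mul0r addr0.
Qed.

Lemma w_ge0 i : (i < n)%N -> forall k, (k <= n)%N -> forall t, 0 <= t -> 0 <= w i k t.
Proof.
move=> iN k kn; move: {2}(n - k)%N (erefl (n - k)%N) => d.
elim: d k kn => [|d IH] k kn hd t ht.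
  have -> : k = n by apply/eqP; rewrite eqn_leq kn -subn_eq0 hd.
  by rewrite wn.
have kn' : (k < n)%N by rewrite -subn_gt0 hd.
apply: (@pos_lemma _ (cs k) _ (w i k.+1)) => //.
- exact: ltW (cs_gt0 kn').
- by move=> s; apply: w_derive.
- by move=> s hs; apply: IH => //; rewrite subnS hd.
by rewrite w0.
Qed.

Lemma wsum_le1 k : (k <= n)%N -> forall t, 0 <= t -> \sum_(i < n) w i k t <= 1.
Proof.
move=> kn t ht; rewrite -subr_ge0.
move: {2}(n - k)%N (erefl (n - k)%N) => d.
elim: d k kn t ht => [|d IH] k kn t ht hd.
  have -> : k = n by apply/eqP; rewrite eqn_leq kn -subn_eq0 hd.
  by rewrite big1 ?subr0 // => i _; rewrite wn.
have kn' : (k < n)%N by rewrite -subn_gt0 hd.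
apply: (@pos_lemma _ (cs k) (fun t => 1 - \sum_(i < n) w i k t)
   (fun t => 1 - \sum_(i < n) w i k.+1 t)) => //.
- exact: ltW (cs_gt0 kn').
- move=> s.
  have H := is_deriveB (is_derive_cst (1:R) s 1)
     (@is_derive_sumf _ _ n (fun i => w i k) _ s (fun i => w_derive (nat_of_ord i) s kn')).
  apply: (is_derive_eq H).
  rewrite -mulr_sumr sumrB; ring.
- by move=> s hs; apply: IH => //; rewrite subnS hd.
rewrite (bigD1 (Ordinal kn')) //= w0 eqxx big1 ?addr0 ?subrr // => i.
by rewrite w0 => /negPf; rewrite -val_eqE /= eq_sym => ->.
Qed.

Lemma rep (j : 'I_m) : forall k, (k <= n)%N -> forall t, 0 <= t ->
  u k t ord0 j = \sum_(i < n) u i 0 ord0 j * w i k t.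
Proof.
move=> k kn; move: {2}(n - k)%N (erefl (n - k)%N) => d.
elim: d k kn => [|d IH] k kn hd t ht.
  have -> : k = n by apply/eqP; rewrite eqn_leq kn -subn_eq0 hd.
  by rewrite u_n mxE big1 // => i _; rewrite wn // mulr0.
have kn' : (k < n)%N by rewrite -subn_gt0 hd.
pose f := fun t => u k t ord0 j - \sum_(i < n) u i 0 ord0 j * w i k t.
pose g := fun t => u k.+1 t ord0 j - \sum_(i < n) u i 0 ord0 j * w i k.+1 t.
have hg : forall t, 0 <= t -> g t = 0.
  by move=> s hs; rewrite /g IH ?subrr // subnS hd.
have hf : forall s, is_derive s (1:R) f (cs k * (g s - f s)).
  move=> s.
  have H := is_deriveB (is_derive_coord ord0 j (u_derive s kn'))
     (@is_derive_sumf _ _ n (fun i => u i 0 ord0 j *: w i k) _ s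
         (fun i => is_deriveZ (u (nat_of_ord i) 0 ord0 j) (w_derive (nat_of_ord i) s kn'))).
  apply: (is_derive_eq H).
  rewrite /f /g !mxE.
  under eq_bigr => i _ do rewrite /GRing.scale /=.
  rewrite -[X in _ = _ * (_ - X - _)]addr0.
  set A := \sum_(i < n) _.
  have -> : A = cs k * (\sum_(i < n) u i 0 ord0 j * w i k.+1 s -
                        \sum_(i < n) u i 0 ord0 j * w i k s).
    rewrite /A -sumrB mulr_sumr; apply: eq_bigr => i _; ring.
  ring.
have f0 : f 0 = 0.
  rewrite /f (bigD1 (Ordinal kn')) //= w0 eqxx mulr1 big1 ?addr0 ?subrr // => i.
  by rewrite w0 => /negPf; rewrite -val_eqE /= eq_sym => ->; rewrite mulr0.
have p1 : 0 <= f t.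
  apply: (@pos_lemma _ (cs k) f g) => //.
  - exact: ltW (cs_gt0 kn').
  - by move=> s hs; rewrite hg.
  - by rewrite f0.
have p2 : 0 <= - f t.
  apply: (@pos_lemma _ (cs k) (fun s => - f s) (fun s => - g s)) => //.
  - exact: ltW (cs_gt0 kn').
  - move=> s; apply: (is_derive_eq (is_deriveN (hf s))); ring.
  - by move=> s hs; rewrite hg // oppr0.
  - by rewrite f0 oppr0.
have : f t = 0 by apply/eqP; rewrite eq_le -oppr_ge0 p1 p2.
by rewrite /f => /eqP; rewrite subr_eq0 => /eqP.
Qed.
End Cascade.

Lemma sum_extend (V : zmodType) (F : nat -> V) a b : (a <= b)%N ->
  (forall j, (a <= j)%N -> F j = 0) -> \sum_(j < a) F j = \sum_(j < b) F j.
Proof.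
move=> ab h; rewrite -!(big_mkord xpredT) (@big_cat_nat _ _ _ a 0 b _ _ (leq0n a) ab) /=.
by rewrite [X in _ = _ + X]big1_seq ?addr0 // => j /andP[_]; rewrite mem_index_iota => /andP[+ _]; apply: h.
Qed.

Lemma hull_lemma (R : realType) (V : lmodType R) (n : nat) (Y : nat -> V) (Om : nat -> R) :
  (0 < n)%N -> Om 0%N <= 1 -> (forall j, (j.+1 < n)%N -> Om j.+1 <= Om j) -> 0 <= Om n.-1 ->
  in_conv_hull (fun i : 'I_n.+1 => \sum_(0 <= j < i) Y j) (\sum_(j < n) Om j *: Y j).
Proof.
move=> n0 h0 hmon hlast.
pose O' j := if (j < n)%N then Om j else 0.
pose G i := if i is i'.+1 then O' i' else 1.
have hmon' : forall i, G i.+1 <= G i.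
  case=> [|i] /=; rewrite /O'; first by case: ifP.
  case: ltnP => hi; first by rewrite ltnW // hmon.
  case: ltnP => hi' //.
  have -> : i = n.-1 by apply/eqP; rewrite eqn_leq -ltnS prednK // hi' -ltnS prednK.
  exact: hlast.
exists (fun i : 'I_n.+1 => G i - G i.+1); split; first by move=> i; rewrite subr_ge0.
split.
  have T : \sum_(0 <= i < n.+1) (G i.+1 - G i) = G n.+1 - G 0%N := telescope_sumr _ (leq0n _).
  rewrite -(big_mkord xpredT (fun i => G i - G i.+1)).
  have -> : \sum_(0 <= i < n.+1) (G i - G i.+1) = - \sum_(0 <= i < n.+1) (G i.+1 - G i).
    by rewrite -sumrN; apply: eq_bigr => i _; rewrite opprB.
  by rewrite T /G /O' /= ltnn sub0r opprK.
have E1 : forall i : 'I_n.+1, (G i - G i.+1) *: \sum_(0 <= j < i) Y j =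
    \sum_(j < n) ((G i - G i.+1) * (j < i)%:R) *: Y j.
  move=> i; rewrite big_mkord.
  rewrite (eq_bigr (fun j : 'I_i => (j < i)%:R *: Y j)); last first.
    by move=> j _; rewrite ltn_ord scale1r.
  rewrite (@sum_extend _ (fun j => (j < i)%:R *: Y j) i n); last first.
  - by move=> j ij; rewrite ltnNge ij scale0r.
  - by rewrite -ltnS.
  by rewrite scaler_sumr; apply: eq_bigr => j _; rewrite scalerA.
rewrite (eq_bigr _ (fun i _ => E1 i)) exchange_big /=.
apply: eq_bigr => j _; rewrite -scaler_suml; congr (_ *: _).
rewrite -(big_mkord xpredT (fun i => (G i - G i.+1) * (j < i)%:R)).
have jn : (j.+1 <= n.+1)%N by rewrite ltnS ltnW.
rewrite (@big_cat_nat _ _ _ j.+1 0 n.+1 _ _ (leq0n _) jn) /=.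
rewrite big1_seq ?add0r; last first.
  by move=> i /andP[_]; rewrite mem_index_iota => /andP[_ ij]; rewrite ltnNge -ltnS ij mulr0.
rewrite (eq_big_seq (fun i => G i - G i.+1)); last first.
  by move=> i; rewrite mem_index_iota => /andP[ji _]; rewrite ji mulr1.
have T : \sum_(j.+1 <= i < n.+1) (G i.+1 - G i) = G n.+1 - G j.+1 := telescope_sumr _ jn.
have -> : \sum_(j.+1 <= i < n.+1) (G i - G i.+1) = - \sum_(j.+1 <= i < n.+1) (G i.+1 - G i).
  by rewrite -sumrN; apply: eq_bigr => i _; rewrite opprB.
by rewrite T opprB /G /O' ltnn ltn_ord subr0.
Qed.

Lemma ratio_le (R : realType) (a b x y : R) : 0 < a -> 0 < b -> x * a <= y * b -> x / b <= y / a.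
Proof.
move=> ha hb h; rewrite ler_pdivrMr // mulrAC ler_pdivlMr //.

Qed.

Unset Implicit Arguments.

Theorem theorem1 (R : realType) (n m : nat) (lam : seq R)
    (x : R -> 'rV[R]_m) (lmax : R) :
  (1 <= n)%N -> (1 <= m)%N ->
  size lam = n ->
  (forall l, l \in lam -> l < 0) ->
  (forall (k : nat) (t : R), (k < n)%N -> derivable (derive1n k x) t 1) ->
  (forall t : R, derive1n n x t = - \sum_(k < n) kappa k lam *: derive1n k x t) ->
  lmax \in lam -> (forall l, l \in lam -> l <= lmax) ->
  forall t : R, 0 <= t ->
    in_conv_hull
      (fun i : 'I_n.+1 =>
         \sum_(0 <= j < i) (kappa j (rem lmax lam) / kappa 0 (rem lmax lam))
                              *: derive1n j x 0)
      (x t).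
Proof.
move=> n1 m1 hsz hneg hder hode lin _ t ht.
set ps := rem lmax lam.
set rs := ps ++ [:: lmax].
have hps : size ps = n.-1 by rewrite size_rem // hsz.
have hrs : size rs = n by rewrite size_cat hps /= addn1 prednK.
have hnegps : forall a, a \in ps -> a < 0 by move=> a /mem_rem; apply: hneg.
have hneg' : forall a, a \in rs -> a < 0.
  by move=> a; rewrite mem_cat inE => /orP[/hnegps|/eqP->] //; apply: hneg.
have hperm : perm_eq rs lam.
  rewrite perm_sym; apply: (perm_trans (perm_to_rem lin)).
  by rewrite /rs -cat1s perm_catC.
have hP : P rs = P lam by apply: perm_big.
have hzero : forall s, \sum_(j < n.+1) (P (take n rs))`_j *: derive1n j x s = 0.
  have -> : take n rs = rs by rewrite -hrs take_size.
  move=> s; rewrite hP big_ord_recr /=.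
  have -> : (P lam)`_n = 1.
    have := monic_prod_XsubC lam xpredT id; rewrite monicE lead_coefE.
    by rewrite (size_prod_XsubC _ id) hsz => /eqP.
  rewrite scale1r hode.
  by under eq_bigr do rewrite -kappaE; rewrite subrr.
have u0 : forall s, u x rs 0 s = x s.
  move=> s; rewrite /u /U /Nk /q take0 /P big_nil coefC /= invr1 scale1r big_ord1 /=.
  by rewrite coefC /= scale1r.
have hx : x t = \sum_(i < n) w n rs i 0 t *: u x rs i 0.
  apply/rowP => j; rewrite -u0.
  rewrite (rep hrs hneg' hder hzero j (leq0n n) ht) summxE.
  by apply: eq_bigr => i _; rewrite !mxE mulrC.
have hV : forall i, (i < n)%N ->
    u x rs i 0 = \sum_(j < n) ((q rs i)`_j / Nk rs i) *: derive1n j x 0.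
  move=> i iN; rewrite /u /U scaler_sumr.
  under eq_bigr do rewrite scalerA mulrC.
  apply: (@sum_extend _ (fun j => ((q rs i)`_j / Nk rs i) *: derive1n j x 0)) => // k ik.
  by rewrite nth_default ?mul0r ?scale0r // (size_q hrs (ltnW iN)).
pose K j := (P ps)`_j.
have hK : forall j, (j < n)%N -> 0 < K j.
  by move=> j jn; apply: pos_P => //; rewrite hps -ltnS prednK.
have hq : forall i, (i < n)%N -> q rs i = P (take i ps).
  move=> i iN; rewrite /q /rs take_cat; case: ltnP => h //.
  have -> : i = size ps by move: h iN; rewrite hps; lia.
  by rewrite subnn take0 cats0 take_size.
have hMR : forall i, (i < n)%N -> MR (q rs i) (P ps).
  move=> i iN; rewrite hq //.
  have := @MR_P _ (take i ps) (drop i ps).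
  rewrite P_cat mulrC -P_cat cat_take_drop; apply.
  by move=> a /hnegps /ltW.
pose Om j := \sum_(i < n) w n rs i 0 t * ((q rs i)`_j / Nk rs i) * (K 0%N / K j).
have Xt : x t = \sum_(j < n) Om j *: ((kappa j ps / kappa 0 ps) *: derive1n j x 0).
  rewrite hx.
  transitivity (\sum_(i < n) \sum_(j < n) (w n rs i 0 t * ((q rs i)`_j / Nk rs i)) *: derive1n j x 0).
    by apply: eq_bigr => i _; rewrite hV // scaler_sumr; apply: eq_bigr => j _; rewrite scalerA.
  rewrite exchange_big; apply: eq_bigr => j _.
  rewrite !kappaE scalerA -scaler_suml; congr (_ *: _).
  rewrite /Om mulr_suml; apply: eq_bigr => i _.
  have h0 := hK 0%N n1; have hj := hK j (ltn_ord j).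
  rewrite -/(K j) -/(K 0%N); field.
  by rewrite !gt_eqF // Nk_gt0.
rewrite Xt; apply: hull_lemma => //.
- rewrite /Om (eq_bigr (fun i : 'I_n => w n rs i 0 t)).
    exact: (wsum_le1 hrs hneg' (leq0n n) ht).
  move=> i _; have a1 := hK 0%N n1; have a2 : 0 < Nk rs i by apply: Nk_gt0.
  by rewrite -/(Nk rs i) divff ?gt_eqF // divff ?gt_eqF // !mulr1.
- move=> j jn; rewrite /Om; apply: ler_sum => i _.
  have wi := w_ge0 hrs hneg' (ltn_ord i) (leq0n n) ht.
  have a2 : 0 < Nk rs i by apply: Nk_gt0.
  have Kj := hK j (ltnW jn); have Kj1 := hK j.+1 jn; have K0 := hK 0%N n1.
  have hr := ratio_le Kj Kj1 (hMR i (ltn_ord i) j j (leqnn j)).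
  rewrite -!mulrA; apply: ler_wpM2l => //.
  have E : forall y z, y * ((Nk rs i)^-1 * (K 0%N / z)) = (y / z) * (K 0%N / Nk rs i).
    by move=> y z; ring.
  rewrite !E; apply: ler_wpM2r => //.
  by rewrite divr_ge0 // ltW.
- rewrite /Om; apply: sumr_ge0 => i _.
  have wi := w_ge0 hrs hneg' (ltn_ord i) (leq0n n) ht.
  have a2 : 0 < Nk rs i by apply: Nk_gt0.
  have Kj : 0 < K n.-1 by apply: hK; rewrite ltn_predL.
  have K0 := hK 0%N n1.
  have hn : NN (q rs i) by apply: NN_P => a ha; apply: ltW; apply: (take_neg hneg' ha).
  by rewrite !mulr_ge0 ?divr_ge0 ?invr_ge0 // ltW.
Qed.
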